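(* Weak-SW-JR does not imply IW-JR, IW-JR does not imply weak-SW-JR, and the two are not mutually exclusive: there exist an approval-based SCV instance and committees $W^1,W^2,W^3$ for it such that $W^1$ satisfies weak-SW-JR but not IW-JR, $W^2$ satisfies IW-JR but not weak-SW-JR, and $W^3$ satisfies both weak-SW-JR and IW-JR.
   Context: An approval-based sub-committee voting (SCV) instance consists of a set of voters $N=\{1,\ldots,n\}$, a finite set of candidates $C$ partitioned into candidate subsets $C_1,\ldots,C_\ell$, positive integer quotas $k_j\le |C_j|$ with $k=\sum_{j=1}^\ell k_j$, and approval ballots $A_i\subseteq C$ for $i\in N$. A committee is a set $W\subseteq C$ with $|W\cap C_j|=k_j$ for every $j$. $W$ satisfies Intra-wise JR (IW-JR) if for every $X\subseteq N$ and every $j$, whenever $|X|\ge n/k_j$ and $|(\bigcap_{i\in X}A_i)\cap C_j|\ge 1$, we have $|W\cap C_j\cap \bigcup_{i\in X}A_i|\ge 1$. $W$ satisfies weak-SW-JR if for every $X\subseteq N$ with $|X|\ge n/k$ and $|(\bigcap_{i\in X}A_i)\cap C_j|\ge 1$ for all $j=1,\ldots,\ell$ we have $|W\cap \bigcup_{i\in X}A_i|\ge 1$. *)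

(* Defs.v *)
From mathcomp Require Import all_boot all_order all_algebra.
Set Implicit Arguments. Unset Strict Implicit. Unset Printing Implicit Defensive.
Import Order.TTheory GRing.Theory Num.Theory.

(* Voters are 'I_n, candidates are 'I_m, the partition C_1..C_l of the
   candidates is given by the map [part] (C_j = part^-1(j)), quotas [quota],
   ballots [ballot i] (A_i). *)
Unset Implicit Arguments.
Record scv_instance := SCV {
  n_voters : nat;
  n_cands : nat;
  n_parts : nat;
  part : 'I_n_cands -> 'I_n_parts;
  quota : 'I_n_parts -> nat;
  ballot : 'I_n_voters -> {set 'I_n_cands}
}.

Set Implicit Arguments.
Section Defs.
Variable I : scv_instance.

Definition Voter := 'I_(n_voters I).
Definition Cand := 'I_(n_cands I).
Definition Part := 'I_(n_parts I).

Definition cset (j : Part) : {set Cand} := [set c : Cand | part I c == j].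

Definition ktot : nat := \sum_(j : Part) quota I j.

Definition valid_instance : Prop :=
  0 < n_voters I /\ forall j : Part, 0 < quota I j <= #|cset j|.

Definition committee (W : {set Cand}) : Prop :=
  forall j : Part, #|W :&: cset j| = quota I j.

Definition bigcapA (X : {set Voter}) : {set Cand} :=
  [set c | [forall i in X, c \in ballot I i]].
Definition bigcupA (X : {set Voter}) : {set Cand} :=
  [set c | [exists i in X, c \in ballot I i]].

Definition large (X : {set Voter}) (q : nat) : Prop :=
  ((n_voters I)%:R / q%:R <= (#|X|)%:R :> rat)%R.

Definition IW_JR (W : {set Cand}) : Prop :=
  forall (X : {set Voter}) (j : Part),
    large X (quota I j) -> 1 <= #|bigcapA X :&: cset j| ->
    1 <= #|W :&: cset j :&: bigcupA X|.

Definition weak_SW_JR (W : {set Cand}) : Prop :=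
  forall X : {set Voter},
    large X ktot -> (forall j : Part, 1 <= #|bigcapA X :&: cset j|) ->
    1 <= #|W :&: bigcupA X|.

End Defs.

(* Main.v *)
Require Import Defs.
From mathcomp Require Import all_boot all_order all_algebra.
Import Order.TTheory GRing.Theory Num.Theory.
Set Implicit Arguments. Unset Strict Implicit.

Lemma large_nat (I : scv_instance) (X : {set Voter I}) q :
  0 < q -> large X q <-> n_voters I <= #|X| * q.
Proof.
move=> q0; rewrite /large ler_pdivrMr ?ltr0n // -natrM ler_nat; split=> //.
Qed.

Lemma large_nonempty (I : scv_instance) (X : {set Voter I}) q :
  0 < n_voters I -> 0 < q -> large X q -> exists i, i \in X.
Proof.
move=> n0 q0 /(large_nat _ q0) H.
have : 0 < #|X| by case: #|X| H => //; rewrite mul0n leqn0 => /eqP E; rewrite E in n0.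
by case/card_gt0P=> i Hi; exists i.
Qed.

Lemma card1_ex (T : finType) (A : {set T}) : 1 <= #|A| <-> exists x, x \in A.
Proof. by split; [case/card_gt0P=> x; exists x | case=> x Hx; apply/card_gt0P; exists x]. Qed.

Lemma weak_suff (I : scv_instance) (W : {set Cand I}) :
  0 < n_voters I -> 0 < ktot I ->
  [forall i : Voter I, [forall j : Part I, [exists c, (c \in ballot I i) && (c \in cset j)]]
     ==> [exists c, (c \in W) && (c \in ballot I i)]] -> weak_SW_JR W.
Proof.
move=> n0 k0 /forallP H X /(large_nonempty n0 k0) [i Hi] Hc.
have /implyP Hi' := H i.
have : [exists c, (c \in W) && (c \in ballot I i)].
  apply: Hi'; apply/forallP=> j; have /card1_ex [c] := Hc j.
  rewrite !inE => /andP [/forallP /(_ i) /implyP /(_ Hi) Hb Hj].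
  by apply/existsP; exists c; rewrite Hb inE.
case/existsP=> c /andP [Hw Hb].
apply/card1_ex; exists c; rewrite !inE Hw /=; apply/existsP; exists i; by rewrite Hi Hb.
Qed.

Lemma iw_suff (I : scv_instance) (W : {set Cand I}) :
  0 < n_voters I -> (forall j, 0 < quota I j) ->
  [forall c : Cand I, (n_voters I <= #|[set i | c \in ballot I i]| * quota I (part I c))
     ==> (c \in W)] -> IW_JR W.
Proof.
move=> n0 q0 /forallP H X j HL /card1_ex [c].
rewrite !inE => /andP [/forallP Hc /eqP Hj].
have [i Hi] := large_nonempty n0 (q0 j) HL.
move/(large_nat _ (q0 j)): HL => HL.
have /implyP := H c; rewrite Hj => Hw.
have Hsub : X \subset [set i | c \in ballot I i].
  by apply/subsetP=> i' Hi'; rewrite inE; have /implyP := Hc i'; apply.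
have HW : c \in W.
  apply: Hw; apply: leq_trans HL _; rewrite leq_mul2r; apply/orP; right.
  exact: subset_leq_card.
apply/card1_ex; exists c; rewrite !inE HW /= Hj eqxx /=.
apply/existsP; exists i; rewrite Hi /=; have /implyP := Hc i; apply; done.
Qed.

Definition ordk n (k : nat) : 'I_n.+1 := Ordinal (ltn_pmod k (ltn0Sn n)).
Lemma ordk_val n (x : 'I_n.+1) : ordk n x = x.
Proof. by apply: val_inj; rewrite /= modn_small. Qed.
Lemma enum_ord_iota n : enum 'I_n.+1 = map (ordk n) (iota 0 n.+1).
Proof.
rewrite -val_enum_ord -map_comp (@eq_map _ _ _ id) ?map_id // => x /=.
by rewrite ordk_val.
Qed.
Lemma card_iota n (A : {pred 'I_n.+1}) : #|A| = count (fun k => ordk n k \in A) (iota 0 n.+1).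
Proof. by rewrite cardE /enum_mem size_filter -enumT enum_ord_iota count_map. Qed.
Lemma forall_iota n (P : pred 'I_n.+1) : [forall x, P x] = all (fun k => P (ordk n k)) (iota 0 n.+1).
Proof.
apply/forallP/allP => [H k _| H x]; first exact: H.
by move: (H x); rewrite ordk_val; apply; rewrite mem_iota /= add0n ltn_ord.
Qed.
Lemma exists_iota n (P : pred 'I_n.+1) : [exists x, P x] = has (fun k => P (ordk n k)) (iota 0 n.+1).
Proof.
apply/existsP/hasP => [[x Hx]| [k _ Hk]]; last by exists (ordk n k).
by exists (nat_of_ord x); [rewrite mem_iota /= add0n ltn_ord | rewrite ordk_val].
Qed.

Definition bal (i c : nat) : bool :=
  match i with
  | 0 => (c == 0) || (c == 3)
  | 1 => (c == 1) || (c == 4)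
  | 2 => (c == 1) || (c == 5)
  | _ => false
  end.

Definition inst : scv_instance :=
  @SCV 4 6 2
    (fun c : 'I_6 => if (c < 3)%N then ord0 else ord_max)
    (fun _ => 2)
    (fun i : 'I_4 => [set c : 'I_6 | bal i c]).

Definition mkW (s : seq nat) : {set Cand inst} := [set c : 'I_6 | nat_of_ord c \in s].
Definition mkV (s : seq nat) : {set Voter inst} := [set c : 'I_4 | nat_of_ord c \in s].
Ltac comp := try rewrite /mkW; try rewrite /mkV; do 6 (rewrite ?card_iota ?forall_iota ?exists_iota /= ?inE); vm_compute; reflexivity.


Theorem mainTheorem4 :
  exists I : scv_instance, valid_instance I /\
    exists W1 W2 W3 : {set Cand I},
      [/\ committee W1 /\ weak_SW_JR W1 /\ ~ IW_JR W1,
          committee W2 /\ IW_JR W2 /\ ~ weak_SW_JR W2 &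
          committee W3 /\ weak_SW_JR W3 /\ IW_JR W3].
Proof.
have n0 : 0 < n_voters inst by [].
have k0 : 0 < ktot inst by rewrite /ktot sum_nat_const card_ord.
have q0 : forall j, 0 < quota inst j by [].
have comm : forall s, [forall j : Part inst, #|mkW s :&: cset j| == 2] -> committee (mkW s).
  by move=> s /forallP H j; apply/eqP; apply: H.
exists inst; split.
  split=> //; apply/forallP; comp.
exists (mkW [:: 0; 2; 4; 5]), (mkW [:: 1; 2; 4; 5]), (mkW [:: 0; 1; 3; 4]).
split.
- split; first by apply: comm; comp.
  split; first by apply: weak_suff => //; comp.
  move=> H.
  have HL : large (mkV [:: 1; 2]) (quota inst (ordk 1 0)) by apply/large_nat => //; comp.
  have HC : 1 <= #|bigcapA (mkV [:: 1; 2]) :&: cset (I:=inst) (ordk 1 0)| by comp.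
  have := H _ _ HL HC.
  have -> : #|mkW [:: 0; 2; 4; 5] :&: cset (I:=inst) (ordk 1 0) :&: bigcupA (mkV [:: 1; 2])| = 0.
    by apply/eqP; comp.
  by [].
- split; first by apply: comm; comp.
  split; first by apply: iw_suff => //; comp.
  move=> H.
  have HL : large (mkV [:: 0]) (ktot inst) by apply/large_nat => //; rewrite /ktot sum_nat_const card_ord; comp.
  have HC : forall j, 1 <= #|bigcapA (mkV [:: 0]) :&: cset j| by apply/forallP; comp.
  have := H _ HL HC.
  have -> : #|mkW [:: 1; 2; 4; 5] :&: bigcupA (mkV [:: 0])| = 0.
    by apply/eqP; comp.
  by [].
- split; first by apply: comm; comp.
  split; first by apply: weak_suff => //; comp.
  by apply: iw_suff => //; comp.
Qed.
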